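(* Let $n\ge2$ and let $Z_1=\{z_{j,1}\}_{j=1}^n$ and $Z_2=\{z_{j,2}\}_{j=1}^{n-1}$ be subsets of the unit circle, $z_{j,l}=e^{ix_{j,l}}$, with exactly one common point, arranged as $$x_{1,1}<x_{1,2}<x_{2,1}<x_{2,2}<\dots<x_{n-1,1}<x_{n-1,2}=x_{n,1}<x_{1,1}+2\pi.$$ For $l=1,2$ let $\mathcal{C}_1^{(l)}=\mathcal{C}(\alpha_0^{(l)},\dots,\alpha_{n-2}^{(l)};\beta_1^{(l)})$ (order $n$) and $\mathcal{C}_2^{(l)}=\mathcal{C}(\alpha_0^{(l)},\dots,\alpha_{n-3}^{(l)};\beta_2^{(l)})$ (order $n-1$) be finite CMV matrices such that the set of eigenvalues of $\mathcal{C}_1^{(l)}$ is $Z_1$ and the set of eigenvalues of $\mathcal{C}_2^{(l)}$ is $Z_2$. If $\alpha_{n-2}^{(1)}=\alpha_{n-2}^{(2)}$, then $\mathcal{C}_1^{(1)}=\mathcal{C}_1^{(2)}$ and $\mathcal{C}_2^{(1)}=\mathcal{C}_2^{(2)}$.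
   Context: For $\alpha\in\mathbb{C}$ with $|\alpha|\le 1$ put $\rho=\sqrt{1-|\alpha|^2}$ and $\Theta(\alpha)=\begin{pmatrix}\bar\alpha&\rho\\ \rho&-\alpha\end{pmatrix}$. Given $N\ge1$, $\alpha_0,\dots,\alpha_{N-2}$ with $|\alpha_j|<1$ and $\beta$ with $|\beta|=1$, the finite CMV matrix $\mathcal{C}(\alpha_0,\dots,\alpha_{N-2};\beta)$ of order $N$ is the $N\times N$ matrix $\mathcal{L}\mathcal{M}$, where: if $N=2k+1$, $\mathcal{L}=\Theta(\alpha_0)\oplus\Theta(\alpha_2)\oplus\cdots\oplus\Theta(\alpha_{2k-2})\oplus\bar\beta$ and $\mathcal{M}=1\oplus\Theta(\alpha_1)\oplus\cdots\oplus\Theta(\alpha_{2k-1})$; if $N=2k$, $\mathcal{L}=\Theta(\alpha_0)\oplus\Theta(\alpha_2)\oplus\cdots\oplus\Theta(\alpha_{2k-2})$ and $\mathcal{M}=1\oplus\Theta(\alpha_1)\oplus\cdots\oplus\Theta(\alpha_{2k-3})\oplus\bar\beta$ ($1$ and $\bar\beta$ are $1\times1$ blocks; for $N=1$ the matrix is $(\bar\beta)$). *)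

(* Defs.v *)
From HB Require Import structures.
From mathcomp Require Import all_boot all_order all_algebra.
From mathcomp Require Import complex.
From mathcomp Require Import reals trigo.
Set Implicit Arguments. Unset Strict Implicit. Unset Printing Implicit Defensive.
Import Order.TTheory GRing.Theory Num.Theory.
Local Open Scope ring_scope.

Section CMV.
Variable R : realType.
Local Notation C := R[i].

Definition rho (a : C) : C := sqrtC (1 - `|a| ^+ 2).

Definition Theta (a : C) : 'M[C]_2 :=
  \matrix_(r < 2, c < 2)
    if (r == 0 :> nat) && (c == 0 :> nat) then a^*
    else if (r == 1 :> nat) && (c == 1 :> nat) then - a
    else rho a.

(* Entry (i,j) of the N x N direct sum
     s = 0 :  Theta(al 0) (+) Theta(al 2) (+) ... [(+) conj be if N odd]
     s = 1 :  1 (+) Theta(al 1) (+) Theta(al 3) (+) ... [(+) conj be if N even]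
   The 2x2 block number b occupies rows/columns 2b-s, 2b-s+1 and carries
   Theta(al (2b-s)); indices not covered by a full 2x2 block are the leading
   1x1 block "1" (s = 1, index 0) or the trailing 1x1 block "conj be". *)
Definition cmv_factor (N s : nat) (al : nat -> C) (be : C) : 'M[C]_N :=
  \matrix_(i < N, j < N)
    let b := ((i + s) %/ 2)%N in
    if ((s <= 2 * b) && (2 * b - s + 1 <= N - 1))%N then
      if ((j + s) %/ 2 == b)%N then
        Theta (al (2 * b - s)%N) (inord ((i + s) %% 2)) (inord ((j + s) %% 2))
      else 0
    else if i == j then (if (s == 1%N) && (i == 0 :> nat) then 1 else be^*)
    else 0.

(* Finite CMV matrix C(al 0, ..., al (N-2); be) of order N : L * M. *)
Definition CMV (N : nat) (al : nat -> C) (be : C) : 'M[C]_N :=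
  cmv_factor N 0 al be *m cmv_factor N 1 al be.

Definition expi (x : R) : C := (cos x +i* sin x)%C.

End CMV.

(* Main.v *)
Require Import Defs.
From HB Require Import structures.
From mathcomp Require Import all_boot all_order all_algebra.
From mathcomp Require Import complex.
From mathcomp Require Import reals trigo.
From mathcomp Require Import zify ring lra.
Import Order.TTheory GRing.Theory Num.Theory.
Local Open Scope ring_scope.

Module CMVProof.
Set Implicit Arguments. Unset Strict Implicit. Unset Printing Implicit Defensive.

Section Tri.
Variable Rg : comRingType.
Variable t : nat -> nat -> Rg.
Hypothesis tri : forall i j : nat, (i.+1 < j)%N || (j.+1 < i)%N -> t i j = 0.

Definition Dk k := \det (\matrix_(i < k, j < k) t i j).

Lemma bump_lt n (i : 'I_n) : bump n i = i.
Proof. by rewrite /bump leqNgt ltn_ord. Qed.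

Lemma minor_max n : row' ord_max (col' ord_max (\matrix_(i < n.+1, j < n.+1) t i j))
          = \matrix_(i < n, j < n) t i j.
Proof. by apply/matrixP => i j; rewrite !mxE /= !bump_lt. Qed.

Lemma minor2 k : row' ord_max (col' (widen_ord (leqnSn k.+1) ord_max)
    (\matrix_(i < k.+2, j < k.+2) t i j)) = \matrix_(i < k.+1, j < k.+1) t i (if (j : nat) == k then k.+1 else j).
Proof.
apply/matrixP => i j; rewrite !mxE /= bump_lt; congr t.
rewrite /bump /=; have := ltn_ord j; case: eqP => [->|]; first by rewrite leqnn.
move=> ne /= lt; rewrite leqNgt; suff -> : (j < k)%N by []; move: ne lt; move: (nat_of_ord j) => m; lia.
Qed.

Lemma det_minor2 k : \det (\matrix_(i < k.+1, j < k.+1) t i (if (j : nat) == k then k.+1 else j))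
   = t k k.+1 * Dk k.
Proof.
rewrite (expand_det_col _ ord_max) big_ord_recr /= big1 ?add0r; last first.
  move=> i _; rewrite !mxE /= eqxx tri ?mul0r //; apply/orP; left => /=.
  by have := ltn_ord i; lia.
rewrite !mxE /cofactor /= eqxx addnn -signr_odd odd_double expr0 mul1r /Dk.
congr (_ * \det _); apply/matrixP => i j; rewrite !mxE /= !bump_lt.
by have := ltn_ord j; case: eqP => // ->; rewrite ltnn.
Qed.

Lemma Dk_rec k : Dk k.+2 = t k.+1 k.+1 * Dk k.+1 - t k.+1 k * t k k.+1 * Dk k.
Proof.
rewrite {1}/Dk (expand_det_row _ ord_max) big_ord_recr big_ord_recr.
rewrite big1 ?add0r; last first.
  move=> j _; rewrite mxE tri ?mul0r //; apply/orP; right.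
  rewrite /=; by have := ltn_ord j; move: (nat_of_ord j) => m; lia.
rewrite /cofactor (minor_max k.+1) minor2 det_minor2 !mxE -/(Dk k.+1) /=.
rewrite add0r.
have -> : (-1) ^+ (k.+1 + k) = -1 :> Rg.
  by rewrite addSn addnn -signr_odd /= odd_double /= expr1.
have -> : (-1) ^+ (k.+1 + k.+1) = 1 :> Rg.
  by rewrite addnn -signr_odd odd_double expr0.
ring.
Qed.
End Tri.


Section Sz.
Variable R : realType.
Local Notation C := R[i].
Variable rh : C -> C.
Hypothesis rh2 : forall a, rh a ^+ 2 = 1 - a * a^*.

Fixpoint sz (g : nat -> C) (k : nat) : {poly C} * {poly C} :=
  match k with
  | 0 => (1, 1)
  | k'.+1 => ('X * (sz g k').1 - (g k')^*%:P * (sz g k').2,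
             (sz g k').2 - (g k')%:P * 'X * (sz g k').1)
  end.

Definition gm (g : nat -> C) (i : nat) : C := if i == 0%N then -1 else g i.-1.

Definition tt (g : nat -> C) (i j : nat) : {poly C} :=
  if i == j then (if odd i then 'X * (g i)%:P + (gm g i)%:P
                  else - ('X * (gm g i)^*%:P) - (g i)^*%:P)
  else if j == i.+1 then (if odd i then 'X * (rh (g i))%:P else - (rh (g i))%:P)
  else if i == j.+1 then (if odd j then 'X * (rh (g j))%:P else - (rh (g j))%:P)
  else 0.

Lemma tt_tri g i j : (i.+1 < j)%N || (j.+1 < i)%N -> tt g i j = 0.
Proof.
rewrite /tt => H; do 3 (case: eqP => [e|_]; [subst; exfalso; move: H; lia|]); done.
Qed.

Lemma tt_sup g i : tt g i i.+1 = if odd i then 'X * (rh (g i))%:P else - (rh (g i))%:P.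
Proof. rewrite /tt; case: eqP => [?|_]; [lia|]; by rewrite eqxx. Qed.
Lemma tt_sub g i : tt g i.+1 i = if odd i then 'X * (rh (g i))%:P else - (rh (g i))%:P.
Proof. rewrite /tt; case: eqP => [?|_]; [lia|]; case: eqP => [?|_]; [lia|]; by rewrite eqxx. Qed.
Lemma rhP a : 1 - a%:P * (a^*)%:P = (rh a)%:P ^+ 2 :> {poly C}.
Proof. by rewrite -(rmorphXn polyC) rh2 rmorphB rmorphM rmorph1. Qed.

Lemma Dk_form g m : Dk (tt g) m.*2 = (-1) ^+ m * (sz g m.*2).2 /\
                    Dk (tt g) m.*2.+1 = (-1) ^+ m * (sz g m.*2.+1).1.
Proof.
have DR := Dk_rec (tt_tri g).
elim: m => [|m [IH1 IH2]].
  rewrite /Dk det_mx00 expr0 !mul1r; split => //.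
  rewrite det_mx11 mxE /tt /= /gm /=.
  have -> : ((-1 : C)^*) = -1 by rewrite rmorphN1.
  rewrite polyCN polyC1; ring.
have E2 : (m.+1).*2 = (m.*2).+2 by rewrite doubleS.
have T1 : tt g m.*2.+1 m.*2.+1 = 'X * (g m.*2.+1)%:P + (g m.*2)%:P.
  by rewrite /tt eqxx /= odd_double /gm.
have T2 : tt g m.*2.+2 m.*2.+2 = - ('X * (g m.*2.+1)^*%:P) - (g m.*2.+2)^*%:P.
  by rewrite /tt eqxx /= odd_double /gm.
have T3 : tt g m.*2.+1 m.*2 * tt g m.*2 m.*2.+1 = 1 - (g m.*2)%:P * (g m.*2)^*%:P.
  by rewrite tt_sub tt_sup odd_double rhP; ring.
have T4 : tt g m.*2.+2 m.*2.+1 * tt g m.*2.+1 m.*2.+2 = 'X^2 * (1 - (g m.*2.+1)%:P * (g m.*2.+1)^*%:P).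
  by rewrite tt_sub tt_sup /= odd_double rhP /=; ring.
rewrite E2; split.
  by rewrite DR IH1 IH2 T1 T3 /= [(-1) ^+ m.+1]exprS; ring.
by rewrite DR DR IH1 IH2 T1 T2 T3 T4 /= [(-1) ^+ m.+1]exprS; ring.
Qed.
End Sz.


Section M.
Variable R : realType.
Local Notation C := R[i].


Definition upd (N : nat) (al : nat -> C) (be : C) : nat -> C :=
  fun m => if (m < N.-1)%N then al m else be.

Definition lf (g : nat -> C) (i j : nat) : C :=
  if odd i then (if j == i.-1 then rho (g i.-1) else if j == i then - g i.-1 else 0)
  else (if j == i then (g i)^* else if j == i.+1 then rho (g i) else 0).

Definition mf (g : nat -> C) (i j : nat) : C :=
  if i == 0%N then (if j == 0%N then 1 else 0)
  else if odd i then (if j == i then (g i)^* else if j == i.+1 then rho (g i) else 0)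
  else (if j == i.-1 then rho (g i.-1) else if j == i then - g i.-1 else 0).

Lemma ThetaE (a : C) x y : (x < 2)%N -> (y < 2)%N ->
  Theta a (inord x) (inord y) =
  if (x == 0%N) && (y == 0%N) then a^* else if (x == 1%N) && (y == 1%N) then - a else rho a.
Proof. by move=> hx hy; rewrite mxE !inordK. Qed.

Lemma L_E N al be (i j : 'I_N) : cmv_factor N 0 al be i j = lf (upd N al be) i j.
Proof.
rewrite /cmv_factor mxE /= !addn0 subn0.
rewrite ThetaE ?ltn_pmod // -[i == j]/(nat_of_ord i == nat_of_ord j).
move: (nat_of_ord i) (ltn_ord i) (nat_of_ord j) (ltn_ord j) => {i j} i Hi j Hj.
rewrite /lf /upd.
repeat (case: ifP => ?; try (exfalso; lia)).
all: try reflexivity.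
all: match goal with |- ?F (?A ?x) = ?F (?A ?y) => (have -> : x = y by lia); reflexivity end.
Qed.
Lemma M_E N al be (i j : 'I_N) : cmv_factor N 1 al be i j = mf (upd N al be) i j.
Proof.
rewrite /cmv_factor mxE /=.
rewrite ThetaE ?ltn_pmod // -[i == j]/(nat_of_ord i == nat_of_ord j).
move: (nat_of_ord i) (ltn_ord i) (nat_of_ord j) (ltn_ord j) => {i j} i Hi j Hj.
rewrite /mf /upd.
repeat (case: ifP => ?; try (exfalso; lia)).
all: try reflexivity.
all: match goal with |- ?F (?A ?x) = ?F (?A ?y) => (have -> : x = y by lia); reflexivity end.
Qed.

Lemma rhoC (a : C) : `|a| <= 1 -> (rho a)^* = rho a.
Proof.
move=> h; apply: conj_Creal; apply: ger0_real; rewrite /rho sqrtC_ge0 subr_ge0.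
by rewrite exprn_ile1.
Qed.

Lemma rho_sq (a : C) : rho a * rho a = 1 - a * a^*.
Proof. by rewrite -expr2 /rho sqrtCK normCK. Qed.

Lemma sum_ind N c (v : C) : \sum_(k < N) (if (k : nat) == c then v else 0) = if (c < N)%N then v else 0.
Proof.
elim: N => [|N IH]; first by rewrite big_ord0.
rewrite big_ord_recr /= IH.
case: eqP => [->|ne]; first by rewrite ltnn ltnSn add0r.
case: ifP => h; rewrite addr0 ?ltnS; first by rewrite ltnW.
by case: ltngtP h ne => // ->.
Qed.

Lemma band_split (f : nat -> C) i (k : nat) :
  (forall k, (k.+1 < i)%N || (i.+1 < k)%N -> f k = 0) ->
  f k = (if k == i.-1 then (if (0 < i)%N then f i.-1 else 0) else 0)
   + (if k == i then f i else 0) + (if k == i.+1 then f i.+1 else 0).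
Proof.
move=> hf.
repeat (case: ifP => ?; try (exfalso; lia)).
all: rewrite ?add0r ?addr0; try (apply: hf; lia).
all: match goal with |- ?F ?x = ?F ?y => (have -> : x = y by lia); reflexivity end.
Qed.

Lemma sum_band N (f : nat -> C) i : (i < N)%N ->
  (forall k, (k.+1 < i)%N || (i.+1 < k)%N -> f k = 0) ->
  \sum_(k < N) f k = (if (0 < i)%N then f i.-1 else 0) + f i + (if (i.+1 < N)%N then f i.+1 else 0).
Proof.
move=> hi hf.
rewrite (eq_bigr _ (fun (k : 'I_N) _ => band_split (nat_of_ord k) hf)) !big_split /= !sum_ind.
have -> : (i.-1 < N)%N by lia.
by rewrite hi.
Qed.

Lemma WM N (g : nat -> C) : (forall m, `|g m| <= 1) -> `|g N.-1| = 1 ->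
  (\matrix_(i < N, j < N) (mf g j i)^*) *m (\matrix_(i < N, j < N) mf g i j) = 1%:M.
Proof.
move=> hg hN; apply/matrixP => i j; rewrite !mxE.
rewrite (eq_bigr (fun k : 'I_N => (mf g k i)^* * mf g k j)); last by move=> k _; rewrite !mxE.
rewrite (@sum_band N (fun k => (mf g k i)^* * mf g k j) i) ?ltn_ord //; last first.
  move=> k hk; rewrite /mf.
  repeat (case: ifP => ?; try (exfalso; lia)); by rewrite ?conjC0 ?mul0r.
rewrite -val_eqE /=.
have hN' : forall i, i = N.-1 -> g i * (g i)^* = 1.
  by move=> k ->; rewrite -normCK hN expr1n.
move: (nat_of_ord i) (ltn_ord i) (nat_of_ord j) (ltn_ord j) => {i j} i Hi j Hj.
case: (eqVneq i j) => [<-|hij]; rewrite ?eqxx ?(negbTE hij) ?mulr1n ?mulr0n.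
all: rewrite /mf.
all: repeat (case: ifP => ?; try (exfalso; lia)).
all: rewrite /= ?conjCK ?rmorphN ?conjC1 ?conjC0 ?(rhoC (hg _)) ?rho_sq ?mulr1 ?mul0r ?mulr0 ?add0r ?addr0.
all: try ring.
all: apply: hN'; lia.
Qed.

Lemma T_E N (g : nat -> C) : (forall m, `|g m| <= 1) ->
  \matrix_(i < N, j < N) tt (@rho R) g i j =
  'X%:M *m map_mx polyC (\matrix_(i < N, j < N) (mf g j i)^*) - map_mx polyC (\matrix_(i < N, j < N) lf g i j).
Proof.
move=> hg; rewrite mul_scalar_mx; apply/matrixP => i j; rewrite !mxE.
move: (nat_of_ord i) (ltn_ord i) (nat_of_ord j) (ltn_ord j) => {i j} i Hi j Hj.
rewrite /tt /mf /lf /gm.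
repeat (case: ifP => ?; try (exfalso; lia)).
all: repeat match goal with H : is_true (?a == ?b) |- _ => move/eqP: H => H; subst end.
all: rewrite /= ?conjCK ?rmorphN ?rmorph1 ?conjC1 ?conjC0 ?(rhoC (hg _)) ?polyCN ?polyC0 ?polyC1.
all: ring.
Qed.

Lemma charD N al be : (forall m, (m < N.-1)%N -> `|al m| <= 1) -> `|be| = 1 ->
  char_poly (CMV N al be) = Dk (tt (@rho R) (upd N al be)) N * (\det (cmv_factor N 1 al be))%:P.
Proof.
move=> ha hb; set g := upd N al be.
have hg : forall m, `|g m| <= 1.
  by move=> m; rewrite /g /upd; case: ifP => h; [apply: ha|rewrite hb].
have hN : `|g N.-1| = 1 by rewrite /g /upd ltnn.
have EL : cmv_factor N 0 al be = \matrix_(i < N, j < N) lf g i j.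
  by apply/matrixP=> i j; rewrite L_E mxE.
have EM : cmv_factor N 1 al be = \matrix_(i < N, j < N) mf g i j.
  by apply/matrixP=> i j; rewrite M_E mxE.
rewrite /CMV /char_poly EL EM /Dk T_E //.
set W := \matrix_(i < N, j < N) (mf g j i)^*.
set L := \matrix_(i < N, j < N) lf g i j.
set M := \matrix_(i < N, j < N) mf g i j.
have -> : char_poly_mx (L *m M) = ('X%:M *m map_mx polyC W - map_mx polyC L) *m map_mx polyC M.
  by rewrite mulmxBl -mulmxA -map_mxM WM // map_mx1 mulmx1 -map_mxM.
by rewrite det_mulmx det_map_mx.
Qed.

Lemma rho_sq' (a : C) : rho a ^+ 2 = 1 - a * a^*.
Proof. by rewrite expr2 rho_sq. Qed.

End M.


Section D.
Variable R : realType.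
Local Notation C := R[i].

Lemma sz_ext (g h : nat -> C) k : (forall m, (m < k)%N -> g m = h m) -> sz g k = sz h k.
Proof.
elim: k => [//|k IH] H /=; rewrite IH ?H //.
by move=> m hm; apply: H; apply: ltnW.
Qed.

Lemma sz_size (g : nat -> C) k :
  [/\ (size (sz g k).2 <= k.+1)%N, lead_coef (sz g k).1 = 1 & size (sz g k).1 = k.+1].
Proof.
elim: k => [|k [IH1 IH2 IH3]] /=; first by rewrite lead_coef1 size_poly1.
have nz : (sz g k).1 != 0 by rewrite -size_poly_eq0 IH3.
have SX : size ('X * (sz g k).1) = k.+2 by rewrite mulrC size_mulX // IH3.
have S2 : (size ((g k)^*%:P * (sz g k).2)%R <= k.+1)%N.
  by rewrite mul_polyC (leq_trans (size_scale_leq _ _)).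
have S3 : (size ((g k)%:P * 'X * (sz g k).1)%R <= k.+2)%N.
  by rewrite -mulrA mul_polyC (leq_trans (size_scale_leq _ _)) // SX.
have S2' : (size (- ((g k)^*%:P * (sz g k).2))%R < size ('X * (sz g k).1)%R)%N.
  by rewrite size_polyN SX ltnS.
split.
- apply: (leq_trans (size_polyD _ _)); rewrite size_polyN geq_max S3 andbT.
  by apply: (leq_trans IH1).
- by rewrite lead_coefDl // mulrC lead_coefMX.
- by rewrite size_polyDl.
Qed.

Lemma sz2_0 (g : nat -> C) k : (sz g k).2.[0] = 1.
Proof.
elim: k => [|k IH] /=; first by rewrite hornerE.
by rewrite !hornerE IH; ring.
Qed.

Lemma sz1_0 (g : nat -> C) k : (sz g k.+1).1.[0] = - (g k)^*.
Proof. by rewrite /= !hornerE sz2_0; ring. Qed.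

Lemma charSz N (al : nat -> C) be : (0 < N)%N -> (forall m, (m < N.-1)%N -> `|al m| <= 1) -> `|be| = 1 ->
  char_poly (CMV N al be) = 'X * (sz al N.-1).1 - be^*%:P * (sz al N.-1).2.
Proof.
move=> N0 ha hb; rewrite charD //.
set g := upd N al be; set d := \det _.
have gN : g N.-1 = be by rewrite /g /upd ltnn.
have key : exists c : C, Dk (tt (@rho R) g) N * d%:P = c%:P * (sz g N).1.
  have := odd_double_half N; case: (odd N) => /= HN.
  - have [_ D2] := Dk_form (@rho_sq' R) g N./2.
    rewrite -HN add1n D2; exists ((-1) ^+ N./2 * d).
    by rewrite polyCM (rmorphXn (@polyC _)) rmorphN1; ring.
  - have [D1 _] := Dk_form (@rho_sq' R) g N./2.
    rewrite add0n in HN; rewrite HN in D1; rewrite D1; exists ((-1) ^+ N./2 * - be * d).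
    have EN : N = (N.-1).+1 by lia.
    rewrite [X in sz g X]EN /= gN.
    have hb' : be * be^* = 1 by rewrite -normCK hb expr1n.
    set P := (sz g N.-1).1; set S := (sz g N.-1).2.
    have E : S - be%:P * 'X * P = (- be)%:P * ('X * P - be^*%:P * S).
      apply/eqP; rewrite -subr_eq0.
      rewrite [X in X == 0](_ : _ = (1 - be * be^*)%:P * S); last first.
        by rewrite polyCB polyCM polyC1 polyCN; ring.
      by rewrite hb' subrr polyC0 mul0r.
    rewrite E !polyCM polyCN (rmorphXn (@polyC _)) rmorphN1; ring.
case: key => c Hk; rewrite Hk.
have L1 := sz_size g N; case: L1 => _ LP _.
have Hc : c = 1.
  have /monicP := char_poly_monic (CMV N al be).
  by rewrite charD // Hk mul_polyC lead_coefZ LP mulr1.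
have EN : N = (N.-1).+1 by lia.
rewrite Hc polyC1 mul1r [X in sz g X]EN /= gN.
by rewrite (@sz_ext g al) // => m hm; rewrite /g /upd hm.
Qed.

End D.


Section E.
Variable R : realType.
Local Notation C := R[i].

Lemma conj_inj' (a b : C) : a^* = b^* -> a = b.
Proof. by move=> h; rewrite -(conjCK a) h conjCK. Qed.

Lemma one_sub_nz (a : C) : `|a| < 1 -> 1 - a * a^* != 0.
Proof.
move=> h; rewrite subr_eq0 -normCK; apply/eqP => e.
have : `|a| ^+ 2 < 1 by rewrite expr_lt1 // normr_ge0.
by rewrite -e ltxx.
Qed.

Lemma verblunsky k (g h : nat -> C) : (forall m, (m < k)%N -> `|g m| < 1) ->
  sz g k = sz h k -> forall m, (m < k)%N -> g m = h m.
Proof.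
elim: k => [//|k IH] hg E.
have [E1 E2] : (sz g k.+1).1 = (sz h k.+1).1 /\ (sz g k.+1).2 = (sz h k.+1).2 by rewrite E.
have ea : g k = h k.
  apply: conj_inj'; have := congr1 (fun p => p.[0]) E1.
  by rewrite !sz1_0 => /oppr_inj.
set P1 := (sz g k).1; set S1 := (sz g k).2.
set P2 := (sz h k).1; set S2 := (sz h k).2.
have HD : ((1 - g k * (g k)^*)%:P * ('X * (P1 - P2))) = 0.
  transitivity (((sz g k.+1).1 - (sz h k.+1).1) + (g k)^*%:P * ((sz g k.+1).2 - (sz h k.+1).2)).
    by rewrite /= -ea polyCB polyCM polyC1; ring.
  by rewrite E1 E2 !subrr mulr0 addr0.
move/eqP: HD; rewrite mulf_eq0 polyC_eq0 (negbTE (one_sub_nz (hg _ (ltnSn k)))) /=.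
rewrite mulf_eq0 polyX_eq0 /= subr_eq0 => /eqP eP.
have eS : S1 = S2.
  transitivity ((sz g k.+1).2 + (g k)%:P * 'X * P1); first by rewrite /=; ring.
  by rewrite E2 /= -ea eP; ring.
have Ek : sz g k = sz h k.
  by rewrite [sz g k]surjective_pairing [sz h k]surjective_pairing -/P1 -/P2 -/S1 -/S2 eP eS.
move=> m; rewrite ltnS leq_eqVlt => /orP [/eqP -> //|hm].
apply: IH => //; move=> j hj; apply: hg; exact: ltnW.
Qed.

Lemma eval0 (g : nat -> C) k (b : C) : ('X * (sz g k).1 - b%:P * (sz g k).2).[0] = - b.
Proof. by rewrite !hornerE sz2_0; ring. Qed.

Lemma uniq_main k (g h : nat -> C) b b' c c' :
 (forall m, (m <= k)%N -> `|g m| < 1) -> g k = h k -> `|b| = 1 -> c != 0 ->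
 'X * (sz g k).1 - b%:P * (sz g k).2 = 'X * (sz h k).1 - b'%:P * (sz h k).2 ->
 'X * (sz g k.+1).1 - c%:P * (sz g k.+1).2 = 'X * (sz h k.+1).1 - c'%:P * (sz h k.+1).2 ->
 [/\ b = b', c = c' & forall m, (m <= k)%N -> g m = h m].
Proof.
move=> hg ea hb hc HQ HP.
have eb : b = b' by apply: oppr_inj; rewrite -(eval0 g k b) -(eval0 h k b') HQ.
have ec : c = c' by apply: oppr_inj; rewrite -(eval0 g k.+1 c) -(eval0 h k.+1 c') HP.
subst b' c'; split => //.
set a := g k.
set F := (sz g k).1; set Fs := (sz g k).2.
set G := (sz h k).1; set Gs := (sz h k).2.
have T : 'X * (F - G) * ((b - a^*)%:P * 'X + (c * (a * b) - c)%:P) = 0.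
  transitivity (b%:P * (('X * (sz g k.+1).1 - c%:P * (sz g k.+1).2) - ('X * (sz h k.+1).1 - c%:P * (sz h k.+1).2))
     - (a^*%:P * 'X + c%:P) * (('X * (sz g k).1 - b%:P * (sz g k).2) - ('X * (sz h k).1 - b%:P * (sz h k).2))).
    by rewrite /= -ea -/a !polyCB !polyCM; ring.
  by rewrite HP HQ !subrr !mulr0 subrr.
move/eqP: T; rewrite mulf_eq0 => /orP [|/eqP lin0]; last first.
  have := congr1 (fun p => p.[0]) lin0; rewrite !hornerE => H0.
  have ab1 : a * b = 1.
    apply/eqP; rewrite -subr_eq0; apply/eqP; apply: (mulfI hc); rewrite mulr0.
    by transitivity (c * a * b - c); [ring | exact: H0].
  have := congr1 (fun z => `|z|) ab1; rewrite normrM hb mulr1 normr1 => a1.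
  by have := hg k (leqnn k); rewrite -/a a1 ltxx.
rewrite mulf_eq0 polyX_eq0 /= subr_eq0 => /eqP eF.
have eFs : Fs = Gs.
  have : b%:P * (Fs - Gs) = 0.
    transitivity ('X * (F - G) - (('X * (sz g k).1 - b%:P * (sz g k).2) - ('X * (sz h k).1 - b%:P * (sz h k).2))).
      by rewrite /=; ring.
    by rewrite HQ eF !subrr mulr0 subrr.
  move/eqP; rewrite mulf_eq0 polyC_eq0 -normr_eq0 hb oner_eq0 /= subr_eq0 => /eqP //.
have Ek : sz g k = sz h k.
  by rewrite [sz g k]surjective_pairing [sz h k]surjective_pairing -/F -/G -/Fs -/Gs eF eFs.
move=> m; rewrite leq_eqVlt => /orP [/eqP -> //|hm].
apply: (verblunsky (k := k)) => // j hj; apply: hg; exact: ltnW.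
Qed.

End E.


Section F.
Variable R : realType.
Local Notation C := R[i].

Lemma factor_ext N s (al al' : nat -> C) be : (forall j, (j < N.-1)%N -> al j = al' j) ->
  cmv_factor N s al be = cmv_factor N s al' be.
Proof.
move=> E; apply/matrixP => i j; rewrite !mxE /=.
case: ifP => // /andP [h1 h2]; rewrite E //.
move: h1 h2; move: (nat_of_ord i) (ltn_ord i) => ii hi; lia.
Qed.

Lemma CMV_ext N (al al' : nat -> C) be : (forall j, (j < N.-1)%N -> al j = al' j) ->
  CMV N al be = CMV N al' be.
Proof. by move=> E; rewrite /CMV (factor_ext 0 be E) (factor_ext 1 be E). Qed.

Lemma char_eq_roots N (A B : 'M[C]_N) (rs : seq C) : size rs = N -> uniq rs ->
  (forall z, z \in rs -> eigenvalue A z) -> (forall z, z \in rs -> eigenvalue B z) ->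
  char_poly A = char_poly B.
Proof.
move=> hs hu hA hB; apply/eqP; rewrite -subr_eq0; apply/negPn/negP => nz.
have hr : all (root (char_poly A - char_poly B)) rs.
  apply/allP => z hz; rewrite rootE !hornerE.
  have := hA z hz; have := hB z hz; rewrite !eigenvalue_root_char => /rootP -> /rootP ->.
  by rewrite subrr.
have := max_poly_roots nz hr hu; rewrite hs.
have sA := size_char_poly A; have sB := size_char_poly B.
have /monicP lA := char_poly_monic A; have /monicP lB := char_poly_monic B.
suff : (size (char_poly A - char_poly B)%R <= N)%N by move=> h1 h2; have := leq_ltn_trans h1 h2; rewrite ltnn.
apply/leq_sizeP => j hj; rewrite coefB.
case: (ltngtP j N) => [|hj'|->]; first by rewrite ltnNge hj.
  by rewrite !nth_default ?subrr // ?sA ?sB.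
by move: lA lB; rewrite !lead_coefE sA sB /= => -> ->; rewrite subrr.
Qed.

Lemma expi_neq (x y : R) : x < y -> y < x + 2 * pi -> expi x != expi y.
Proof.
move=> hxy hyx; apply/negP => /eqP e.
have [ec es] : cos x = cos y /\ sin x = sin y by move: e; rewrite /expi => -[-> ->].
set h := (x + y) / 2; set d := (y - x) / 2.
have Ex : x = h - d by rewrite /h /d; field.
have Ey : y = h + d by rewrite /h /d; field.
have e1 : sin h * sin d = 0.
  have : cos y - cos x = 0 by rewrite ec subrr.
  rewrite Ey Ex cosD cosB => H.
  by transitivity (- (cos h * cos d - sin h * sin d - (cos h * cos d + sin h * sin d)) / 2); [field | rewrite H; ring].
have e2 : cos h * sin d = 0.
  have : sin y - sin x = 0 by rewrite es subrr.
  rewrite Ey Ex sinD sinB => H.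
  by transitivity ((sin h * cos d + cos h * sin d - (sin h * cos d - cos h * sin d)) / 2); [field | rewrite H; ring].
have sd : 0 < sin d.
  apply: sin_gt0_pi; have := pi_gt0 R; rewrite /d => hp; apply/andP; split; lra.
have : sin d = 0.
  transitivity (sin d * (cos h ^+ 2 + sin h ^+ 2)); first by rewrite cos2Dsin2 mulr1.
  by transitivity (cos h * (cos h * sin d) + sin h * (sin h * sin d)); [ring | rewrite e1 e2; ring].
by move=> h0; move: sd; rewrite h0 ltxx.
Qed.

Lemma mono_f (f : nat -> R) N : (forall j, (1 <= j)%N -> (j < N)%N -> f j < f j.+1) ->
  forall i j, (1 <= i)%N -> (i < j)%N -> (j <= N)%N -> f i < f j.
Proof.
move=> hf i j hi; elim: j => [//|j IH] hij hjN.
rewrite ltnS leq_eqVlt in hij; case/orP: hij => [/eqP eij|hij].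
  by rewrite -eij; apply: hf => //; rewrite eij.
apply: (lt_trans (IH hij (ltnW hjN))); apply: hf => //.
by apply: leq_trans hi (ltnW hij).
Qed.

Lemma uniq_expi (f : nat -> R) N : (forall j, (1 <= j)%N -> (j < N)%N -> f j < f j.+1) ->
  f N < f 1%N + 2 * pi -> uniq [seq expi (f j) | j <- iota 1 N].
Proof.
move=> hf hN; rewrite map_inj_in_uniq ?iota_uniq //.
have le1 : forall i, (1 <= i <= N)%N -> f 1%N <= f i.
  move=> i /andP [h1 h2]; have [<-//|h] := eqVneq 1%N i.
  by apply: ltW; apply: (mono_f hf) h2 => //; lia.
have leN : forall i, (1 <= i <= N)%N -> f i <= f N.
  move=> i /andP [h1 h2]; have [->//|h] := eqVneq i N.
  by apply: ltW; apply: (mono_f hf) h1 _ _ => //; lia.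
have key : forall i j, (1 <= i <= N)%N -> (1 <= j <= N)%N -> (i < j)%N -> expi (f i) != expi (f j).
  move=> i j hi hj hij; apply: expi_neq.
    by apply: mono_f hf _ _ _ hij _; lia.
  have := le1 i hi; have := leN j hj; lra.
move=> i j; rewrite !mem_iota => hi hj e.
have hi' : (1 <= i <= N)%N by lia.
have hj' : (1 <= j <= N)%N by lia.
case: (ltngtP i j) => // h.
  by have := key i j hi' hj' h; rewrite e eqxx.
by have := key j i hj' hi' h; rewrite e eqxx.
Qed.

Lemma iota_mem j N : j \in iota 1 N -> (1 <= j <= N)%N.
Proof. rewrite mem_iota; lia. Qed.

End F.

End CMVProof.
Import CMVProof.

Theorem theorem7 (R : realType) (n : nat) (x1 x2 : nat -> R)
  (a1 a2 : nat -> R[i]) (b11 b21 b12 b22 : R[i]) :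
  (2 <= n)%N ->
  (forall j, (1 <= j <= n - 1)%N -> x1 j < x2 j) ->
  (forall j, (1 <= j <= n - 2)%N -> x2 j < x1 j.+1) ->
  x2 (n - 1)%N = x1 n ->
  x1 n < x1 1%N + 2 * pi ->
  (forall j, (j <= n - 2)%N -> `|a1 j| < 1) ->
  (forall j, (j <= n - 2)%N -> `|a2 j| < 1) ->
  `|b11| = 1 -> `|b21| = 1 -> `|b12| = 1 -> `|b22| = 1 ->
  (forall z, eigenvalue (CMV n a1 b11) z <-> exists2 j, (1 <= j <= n)%N & z = expi (x1 j)) ->
  (forall z, eigenvalue (CMV (n - 1) a1 b21) z <-> exists2 j, (1 <= j <= n - 1)%N & z = expi (x2 j)) ->
  (forall z, eigenvalue (CMV n a2 b12) z <-> exists2 j, (1 <= j <= n)%N & z = expi (x1 j)) ->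
  (forall z, eigenvalue (CMV (n - 1) a2 b22) z <-> exists2 j, (1 <= j <= n - 1)%N & z = expi (x2 j)) ->
  a1 (n - 2)%N = a2 (n - 2)%N ->
  CMV n a1 b11 = CMV n a2 b12 /\ CMV (n - 1) a1 b21 = CMV (n - 1) a2 b22.
Proof.
move=> hn H1 H2 H3 H4 ha1 ha2 hb11 hb21 hb12 hb22 S11 S21 S12 S22 ha.
have mono1 : forall j, (1 <= j)%N -> (j < n)%N -> x1 j < x1 j.+1.
  move=> j h1 h2; apply: (lt_le_trans (H1 j _)); first by lia.
  have [e|ne] := eqVneq j (n - 1)%N; first by rewrite e H3; have -> : (n - 1).+1 = n by lia.
  by apply: ltW; apply: H2; lia.
have mono2 : forall j, (1 <= j)%N -> (j < n - 1)%N -> x2 j < x2 j.+1.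
  move=> j h1 h2; apply: (lt_trans (H2 j _)); first by lia.
  by apply: H1; lia.
have bound2 : x2 (n - 1)%N < x2 1%N + 2 * pi.
  by rewrite H3; apply: (lt_trans H4); rewrite ltrD2r; apply: H1; lia.
have En1 : n.-1 = (n - 2).+1 by lia.
have En2 : (n - 1).-1 = (n - 2)%N by lia.
have n0 : (0 < n)%N by lia.
have n1 : (0 < n - 1)%N by lia.
have CP1 : char_poly (CMV n a1 b11) = char_poly (CMV n a2 b12).
  apply: (char_eq_roots (rs := [seq expi (x1 j) | j <- iota 1 n])).
  - by rewrite size_map size_iota.
  - exact: uniq_expi mono1 H4.
  - move=> z /mapP [j hj ->]; apply: (proj2 (S11 _)); exists j; [exact: iota_mem hj | by []].
  - move=> z /mapP [j hj ->]; apply: (proj2 (S12 _)); exists j; [exact: iota_mem hj | by []].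
have CP2 : char_poly (CMV (n - 1) a1 b21) = char_poly (CMV (n - 1) a2 b22).
  apply: (char_eq_roots (rs := [seq expi (x2 j) | j <- iota 1 (n - 1)])).
  - by rewrite size_map size_iota.
  - exact: uniq_expi mono2 bound2.
  - move=> z /mapP [j hj ->]; apply: (proj2 (S21 _)); exists j; [exact: iota_mem hj | by []].
  - move=> z /mapP [j hj ->]; apply: (proj2 (S22 _)); exists j; [exact: iota_mem hj | by []].
have hA1 : forall al : nat -> R[i], (forall j, (j <= n - 2)%N -> `|al j| < 1) ->
   forall m, (m < n.-1)%N -> `|al m| <= 1.
  by move=> al h m hm; apply: ltW; apply: h; move: hm; clear; lia.
have hA2 : forall al : nat -> R[i], (forall j, (j <= n - 2)%N -> `|al j| < 1) ->
   forall m, (m < (n - 1).-1)%N -> `|al m| <= 1.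
  by move=> al h m hm; apply: ltW; apply: h; move: hm; clear; lia.
rewrite (charSz n0 (hA1 _ ha1) hb11) (charSz n0 (hA1 _ ha2) hb12) En1 in CP1.
rewrite (charSz n1 (hA2 _ ha1) hb21) (charSz n1 (hA2 _ ha2) hb22) En2 in CP2.
have nz : b11^* != 0 by rewrite -normr_eq0 norm_conjC hb11 oner_eq0.
have [e2 e1 ea] := uniq_main (fun m hm => ha1 m hm) ha (etrans (norm_conjC b21) hb21) nz CP2 CP1.
split.
  rewrite (conj_inj' e1); apply: CMV_ext => j; rewrite En1 ltnS => hj; exact: ea.
rewrite (conj_inj' e2); apply: CMV_ext => j; rewrite En2 => hj; apply: ea; exact: ltnW.
Qed.
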